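(* Let $k\in\{3,4,\dots\}$, let $\mathcal A=(A,\mathrm{cl})\in PG(\mathcal C_k)$ and let $C\subseteq A$ with $C\unlhd_\infty\mathcal A$. Then $C\unlhd_k\mathcal A$.
   Context: A set system is a pair $(A;R)$ where $R$ is a set of finite non-empty subsets of $A$; for $X\subseteq A$, $R[X]=\{r\in R:r\subseteq X\}$ and $\delta(X)=|X|-|R[X]|$. $\mathcal C=\mathcal C_\infty$ is the class of finite set systems with $\delta(X)\ge0$ for all $X\subseteq A$, and $\mathcal C_k$ is the class of members of $\mathcal C$ all of whose sets in $R$ have size at most $k$. $X\le(A;R)$ means $\delta(X)\le\delta(X')$ for all $X\subseteq X'\subseteq A$. For $(A;R)\in\mathcal C$, $d(X)=\min\{\delta(Y):X\subseteq Y\subseteq A\}$, $\mathrm{cl}(X)=\{y:d(X\cup\{y\})=d(X)\}$, and $PG(A;R)=(A,\mathrm{cl})$. A presentation of a matroid $\mathcal A$ is a set system $(A;R)\in\mathcal C$ with $PG(A;R)=\mathcal A$; $PG(\mathcal C_k)$ is the class of matroids having a presentation in $\mathcal C_k$. For $k\in\{3,4,\dots,\infty\}$ and $C\subseteq A$, $C\unlhd_k\mathcal A$ means there is a presentation $(A;R)\in\mathcal C_k$ of $\mathcal A$ with $C\le(A;R)$. *)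

(* Defs.v *)
From mathcomp Require Import all_boot all_order all_algebra.
Set Implicit Arguments. Unset Strict Implicit. Unset Printing Implicit Defensive.
Import Order.TTheory GRing.Theory Num.Theory.

(* A set system (A;R): the ground set A is the whole finite type T,
   R : {set {set T}} is a set of (finite) subsets of A. *)
Section SetSystems.
Variable T : finType.

Definition Rof (R : {set {set T}}) (X : {set T}) : {set {set T}} :=
  [set r in R | r \subset X].

Definition delta (R : {set {set T}}) (X : {set T}) : int :=
  (#|X|%:Z - #|Rof R X|%:Z)%R.

(* membership in C = C_infinity: sets of R are non-empty, delta >= 0 *)
Definition inC (R : {set {set T}}) : Prop :=
  set0 \notin R /\ forall X : {set T}, (0 <= delta R X)%R.

(* k : option nat, None standing for infinity. C_k *)
Definition inCk (k : option nat) (R : {set {set T}}) : Prop :=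
  inC R /\ (forall r, r \in R -> if k is Some k' then #|r| <= k' else true).

Definition selfint (R : {set {set T}}) (X : {set T}) : Prop :=
  forall X' : {set T}, X \subset X' -> (delta R X <= delta R X')%R.

(* d(X) = min { delta(Y) : X \subset Y \subset A } (setT is a witness) *)
Definition dR (R : {set {set T}}) (X : {set T}) : int :=
  \big[Order.min/delta R setT]_(Y : {set T} | X \subset Y) delta R Y.

(* cl(X) = { y : d(X u {y}) = d(X) } ; PG(A;R) = (A, clR R) *)
Definition clR (R : {set {set T}}) (X : {set T}) : {set T} :=
  [set y | dR R (y |: X) == dR R X].

Definition presentation (R : {set {set T}}) (cl : {set T} -> {set T}) : Prop :=
  inC R /\ clR R = cl.

Definition inPGCk (k : option nat) (cl : {set T} -> {set T}) : Prop :=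
  exists R, inCk k R /\ clR R = cl.

Definition unlhd (k : option nat) (C : {set T}) (cl : {set T} -> {set T}) : Prop :=
  exists R, inCk k R /\ clR R = cl /\ selfint R C.

End SetSystems.

(* Main.v *)
Require Import Defs.
From mathcomp Require Import all_boot all_order all_algebra zify.
From Stdlib Require Import Classical FunctionalExtensionality.
Set Implicit Arguments. Unset Strict Implicit. Unset Printing Implicit Defensive.
Import Order.TTheory GRing.Theory Num.Theory.

Lemma card_Rof_le {T : finType} (R : {set {set T}}) (X Y : {set T}) :
  X \subset Y -> #|Rof R X| <= #|Rof R Y|.
Proof.
move=> sXY; apply: subset_leq_card; apply/subsetP=> q.
rewrite !inE => /andP[-> sq]; exact: subset_trans sq sXY.
Qed.

Lemma RofI {T : finType} (R : {set {set T}}) (X Y : {set T}) :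
  Rof R (X :&: Y) = Rof R X :&: Rof R Y.
Proof.
by apply/setP=> q; rewrite !inE subsetI; case: (q \in R).
Qed.

Lemma delta_submod {T : finType} (R : {set {set T}}) (X Y : {set T}) :
  (delta R (X :|: Y) + delta R (X :&: Y) <= delta R X + delta R Y)%R.
Proof.
rewrite /delta.
have h1 := cardsUI X Y.
have h2 := cardsUI (Rof R X) (Rof R Y).
have h3 : #|Rof R X :|: Rof R Y| <= #|Rof R (X :|: Y)|.
  apply: subset_leq_card; apply/subsetP=> q; rewrite !inE.
  case/orP=> /andP[-> s]; apply/andP; split=> //; apply: subset_trans s _;
  [exact: subsetUl | exact: subsetUr].
rewrite -RofI in h2.
lia.
Qed.

Lemma dR_le {T : finType} (R : {set {set T}}) (X Z : {set T}) :
  X \subset Z -> (dR R X <= delta R Z)%R.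
Proof.
move=> sXZ; rewrite /dR (bigD1 Z) //=.
by rewrite ge_min lexx.
Qed.

Lemma dR_ex {T : finType} (R : {set {set T}}) (X : {set T}) :
  exists2 Z : {set T}, X \subset Z & dR R X = delta R Z.
Proof.
rewrite /dR; apply: (big_ind (fun v => exists2 Z : {set T}, X \subset Z & v = delta R Z)).
- by exists setT => //; apply: subsetT.
- move=> v w [Z1 s1 e1] [Z2 s2 e2]; rewrite minEle; case: ifP=> _.
  + by exists Z1.
  + by exists Z2.
- by move=> Z sZ; exists Z.
Qed.

Lemma dR_mono {T : finType} (R : {set {set T}}) (X Y : {set T}) :
  X \subset Y -> (dR R X <= dR R Y)%R.
Proof.
move=> sXY; have [Z sYZ ->] := dR_ex R Y.
apply: dR_le; exact: subset_trans sXY sYZ.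
Qed.

Lemma dR_ge0 {T : finType} (R : {set {set T}}) (X : {set T}) :
  inC R -> (0 <= dR R X)%R.
Proof. by move=> [_ h]; have [Z _ ->] := dR_ex R X. Qed.

Lemma selfint_dR {T : finType} (R : {set {set T}}) (X : {set T}) :
  selfint R X -> dR R X = delta R X.
Proof.
move=> h; have [Z sXZ e] := dR_ex R X.
apply/eqP; rewrite eq_le dR_le // e; exact: h.
Qed.

Lemma dR_selfint {T : finType} (R : {set {set T}}) (X : {set T}) :
  dR R X = delta R X -> selfint R X.
Proof. by move=> e X' sXX'; rewrite -e; apply: dR_le. Qed.

Lemma not_selfint_lt {T : finType} (R : {set {set T}}) (X : {set T}) :
  ~ selfint R X -> (dR R X < delta R X)%R.
Proof.
move=> ns; rewrite lt_neqAle dR_le // andbT; apply/eqP=> e.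
by apply: ns; apply: dR_selfint.
Qed.

Lemma dR_submod {T : finType} (R : {set {set T}}) (X Y : {set T}) :
  (dR R (X :|: Y) + dR R (X :&: Y) <= dR R X + dR R Y)%R.
Proof.
have [X' sX eX] := dR_ex R X; have [Y' sY eY] := dR_ex R Y.
rewrite eX eY; apply: le_trans (delta_submod R X' Y').
apply: lerD; apply: dR_le.
- by apply: setUSS.
- by apply: setISS.
Qed.

Lemma dR_subadd {T : finType} (R : {set {set T}}) (X Y : {set T}) :
  inC R -> (dR R (X :|: Y) <= dR R X + dR R Y)%R.
Proof.
move=> hC; have h1 := dR_submod R X Y; have h2 := dR_ge0 (X :&: Y) hC. lia.
Qed.

Lemma selfintI {T : finType} (R : {set {set T}}) (X Y : {set T}) :
  selfint R X -> selfint R Y -> selfint R (X :&: Y).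
Proof.
move=> hX hY Z sZ.
have h1 := delta_submod R X Z.
have h2 : (delta R X <= delta R (X :|: Z))%R by apply: hX; apply: subsetUl.
have h3 : (delta R Y <= delta R (Y :|: (X :&: Z)))%R by apply: hY; apply: subsetUl.
have h4 := delta_submod R Y (X :&: Z).
have e : Y :&: (X :&: Z) = X :&: Y.
  apply/setP=> u; rewrite !inE.
  case uX: (u \in X); case uY: (u \in Y); rewrite ?andbF //= ?andbT.
  by move/subsetP: sZ => /(_ u); rewrite !inE uX uY => /(_ isT) ->.
rewrite e in h4. lia.
Qed.

Lemma delta_set0 {T : finType} (R : {set {set T}}) :
  inC R -> delta R set0 = 0%R.
Proof.
move=> [n0 _]; rewrite /delta cards0.
suff -> : Rof R set0 = set0 by rewrite cards0.
apply/setP=> q; rewrite !inE subset0; apply/andP=> [[qR /eqP qe]].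
by rewrite -qe qR in n0.
Qed.

Lemma dR_set0 {T : finType} (R : {set {set T}}) :
  inC R -> dR R set0 = 0%R.
Proof.
move=> hC; apply/eqP; rewrite eq_le dR_ge0 // andbT.
by rewrite -(delta_set0 hC) dR_le.
Qed.

Lemma delta_add1 {T : finType} (R : {set {set T}}) (y : T) (Z : {set T}) :
  (delta R (y |: Z) <= delta R Z + 1)%R.
Proof.
rewrite /delta.
have h1 : #|y |: Z| <= #|Z| + 1 by rewrite cardsU1 addnC leq_add2l leq_b1.
have h2 : #|Rof R Z| <= #|Rof R (y |: Z)| by apply: card_Rof_le; apply: subsetUr.
lia.
Qed.

Lemma dR_add1 {T : finType} (R : {set {set T}}) (y : T) (X : {set T}) :
  (dR R (y |: X) <= dR R X + 1)%R.
Proof.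
have [Z sXZ ->] := dR_ex R X.
apply: le_trans (delta_add1 R y Z); apply: dR_le; exact: setUS.
Qed.

Lemma dR_step {T : finType} (R : {set {set T}}) (y : T) (X : {set T}) :
  dR R (y |: X) = (dR R X + (y \notin clR R X)%:R)%R.
Proof.
rewrite /clR inE; case: eqP => [-> | ne] /=; first by rewrite addr0.
have h1 := dR_add1 R y X; have h2 : (dR R X <= dR R (y |: X))%R.
  by apply: dR_mono; apply: subsetUr.
have : dR R (y |: X) <> dR R X by [].
lia.
Qed.

Lemma dR_clR_eq {T : finType} (P Q : {set {set T}}) :
  inC P -> inC Q -> clR P = clR Q -> forall X, dR P X = dR Q X.
Proof.
move=> hP hQ ecl X.
move: {2}#|X| (erefl #|X|) => n; elim: n X => [|n IH] X hX.
  by move/eqP: hX; rewrite cards_eq0 => /eqP ->; rewrite !dR_set0.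
have [y yX] : exists y, y \in X.
  by apply/set0Pn; rewrite -card_gt0 hX.
have eX : X = y |: (X :\ y) by rewrite setD1K.
rewrite eX !dR_step IH ?ecl //.
by move: hX; rewrite (cardsD1 y) yX add1n => -[].
Qed.

Lemma card_Rof_sum {T : finType} (P : {set {set T}}) (Y : {set T}) :
  #|Rof P Y| = \sum_(q in P) (q \subset Y : nat).
Proof.
rewrite /Rof -sum1dep_card [RHS]big_mkcond [LHS]big_mkcond /=.
by apply: eq_bigr=> q _; case: (q \in P); case: (q \subset Y).
Qed.

Definition shrink {T : finType} (R : {set {set T}}) (r : {set T}) (x : T) :=
  (r :\ x) |: (R :\ r).

Definition measure {T : finType} (R : {set {set T}}) := \sum_(q in R) #|q|.

Lemma shrink_card {T : finType} (R : {set {set T}}) r x (Y : {set T}) :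
  r \in R -> r :\ x \notin R ->
  #|Rof (shrink R r x) Y| + (r \subset Y) = (r :\ x \subset Y) + #|Rof R Y|.
Proof.
move=> rR sR.
have sR' : r :\ x \notin R :\ r by rewrite inE negb_and sR orbT.
rewrite !card_Rof_sum /shrink big_setU1 //= (big_setD1 r rR) /=.
by rewrite -!addnA; congr (_ + _); apply: addnC.
Qed.

Lemma shrink_measure {T : finType} (R : {set {set T}}) r x :
  r \in R -> r :\ x \notin R -> x \in r ->
  measure (shrink R r x) < measure R.
Proof.
move=> rR sR xr.
have sR' : r :\ x \notin R :\ r by rewrite inE negb_and sR orbT.
rewrite /measure /shrink big_setU1 //= (big_setD1 r rR) /=.
rewrite ltn_add2r (cardsD1 x r) xr; lia.
Qed.

Lemma shrink_delta {T : finType} (R : {set {set T}}) r x (Y : {set T}) :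
  r \in R -> r :\ x \notin R ->
  delta (shrink R r x) Y = (delta R Y + (r \subset Y)%:R - (r :\ x \subset Y)%:R)%R.
Proof.
move=> rR sR; have h := shrink_card Y rR sR.
rewrite /delta. lia.
Qed.

Lemma dR_eq_of {T : finType} (R R' : {set {set T}}) :
  (forall Y, dR R Y <= delta R' Y)%R -> (forall Y, delta R' Y <= delta R Y)%R ->
  forall X, dR R' X = dR R X.
Proof.
move=> h1 h2 X; apply/eqP; rewrite eq_le; apply/andP; split.
- have [Z sXZ ->] := dR_ex R X; apply: le_trans (h2 Z); exact: dR_le.
- have [Z sXZ ->] := dR_ex R' X; apply: le_trans (h1 Z); exact: dR_mono.
Qed.

Lemma shrink_ok {T : finType} (R : {set {set T}}) r x :
  inC R -> r \in R -> x \in r -> 2 <= #|r| -> r :\ x \notin R ->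
  (forall Y : {set T}, r :\ x \subset Y -> selfint R Y -> x \in Y) ->
  [/\ inC (shrink R r x), (forall X, dR (shrink R r x) X = dR R X) &
      (forall Y, delta (shrink R r x) Y <= delta R Y)%R].
Proof.
move=> hC rR xr r2 sR hY.
have srr : r :\ x \subset r by apply: subsetDl.
have hle : forall Y, (delta (shrink R r x) Y <= delta R Y)%R.
  move=> Y; rewrite shrink_delta //.
  case rY: (r \subset Y); first by rewrite (subset_trans srr rY); lia.
  lia.
have hge : forall Y, (dR R Y <= delta (shrink R r x) Y)%R.
  move=> Y; rewrite shrink_delta //.
  have hd0 := dR_le R (subxx Y).
  case rY: (r \subset Y); first by rewrite (subset_trans srr rY) /=; lia.
  case sY: (r :\ x \subset Y); last by rewrite /=; lia.
  have xY : x \notin Y.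
    apply/negP=> xY; move/negP: rY; apply.
    by rewrite -(setD1K xr) subUset sub1set xY sY.
  have ns : ~ selfint R Y by move=> si; move: xY; rewrite hY.
  have := not_selfint_lt ns; rewrite /=; lia.
have hd := dR_eq_of hge hle.
split=> //; split.
- rewrite /shrink !inE negb_or; apply/andP; split.
  + apply/eqP=> e; move: r2; rewrite (cardsD1 x r) xr -e cards0; lia.
  + by rewrite negb_and; case: hC => -> _; rewrite orbT.
- move=> X; apply: le_trans (hge X); exact: dR_ge0.
Qed.

Lemma selfint_shrink {T : finType} (R R' : {set {set T}}) (C : {set T}) :
  (forall X, dR R' X = dR R X) -> (forall Y, delta R' Y <= delta R Y)%R ->
  selfint R C -> selfint R' C.
Proof.
move=> hd hle sC; apply: dR_selfint; apply/eqP; rewrite eq_le.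
rewrite dR_le //= hd (selfint_dR sC); exact: hle.
Qed.

Definition selfintb {T : finType} (R : {set {set T}}) (Y : {set T}) :=
  [forall X' : {set T}, (Y \subset X') ==> (delta R Y <= delta R X')%R].

Lemma selfintP {T : finType} (R : {set {set T}}) (Y : {set T}) :
  reflect (selfint R Y) (selfintb R Y).
Proof.
apply: (iffP forallP) => h X'.
- by move=> s; move: (h X'); rewrite s.
- by apply/implyP; apply: h.
Qed.

Lemma selfintT {T : finType} (R : {set {set T}}) : selfint R setT.
Proof.
by move=> X' s; have -> : X' = setT by apply/eqP; rewrite eqEsubset subsetT.
Qed.

Lemma delta_addx {T : finType} (R : {set {set T}}) (r P : {set T}) x :
  r \in R -> x \in r -> x \notin P -> r \subset x |: P ->
  (delta R (x |: P) <= delta R P)%R.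
Proof.
move=> rR xr xP rs.
have e1 : #|x |: P| = #|P| + 1 by rewrite cardsU1 xP addnC.
have e2 : #|Rof R P| + 1 <= #|Rof R (x |: P)|.
  have -> : #|Rof R P| + 1 = #|r |: Rof R P|.
    rewrite cardsU1 addnC.
    have -> : r \notin Rof R P.
      rewrite inE negb_and; apply/orP; right; apply/negP=> /subsetP/(_ x xr).
      by rewrite (negbTE xP).
    by [].
  apply: subset_leq_card; apply/subsetP=> q; rewrite !inE.
  case/orP=> [/eqP -> | /andP[-> qs]]; first by rewrite rR rs.
  by rewrite /= (subset_trans qs) // subsetUr.
rewrite /delta; lia.
Qed.


Lemma strong {T : finType} (R : {set {set T}}) (r : {set T}) :
  inC R -> r \in R -> (dR R r + 2 <= (#|r|)%:Z)%R ->
  exists2 x, x \in r &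
    r :\ x \notin R /\ (forall Y : {set T}, r :\ x \subset Y -> selfint R Y -> x \in Y).
Proof.
move=> hC rR hd.
set S := \bigcap_(Y : {set T} | (r \subset Y) && selfintb R Y) Y.
have rS : r \subset S.
  by apply/bigcapsP=> Y /andP[].
have SS : selfint R S.
  apply: (big_ind (selfint R)); first exact: selfintT.
  - by move=> A B; apply: selfintI.
  - by move=> Y /andP[_ /selfintP].
have Sinf : forall Y : {set T}, r \subset Y -> selfint R Y -> S \subset Y.
  move=> Y rY sY; apply: bigcap_inf; rewrite rY /=; exact/selfintP.
have Uniq : forall x, x \in r ->
    (exists Y : {set T}, [/\ r :\ x \subset Y, selfint R Y & x \notin Y]) ->
    forall q : {set T}, q \in R -> q \subset S -> x \in q -> q = r.
  move=> x xr [Y [rY sY xY]] q qR qS xq.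
  set P := Y :&: S.
  have sP : selfint R P by apply: selfintI.
  have xP : x \notin P by rewrite inE negb_and xY.
  have rxP : r :\ x \subset P by rewrite subsetI rY (subset_trans _ rS) // subsetDl.
  have rsub : r \subset x |: P by rewrite -(setD1K xr) setUS.
  have sxP : selfint R (x |: P).
    move=> Z sZ; apply: le_trans (delta_addx rR xr xP rsub) _.
    apply: sP; apply: subset_trans sZ; exact: subsetUr.
  have Ssub : S \subset x |: P by apply: Sinf.
  have PS : P \subset S by apply: subsetIr.
  have hPS := sP S PS.
  case: (eqVneq q r) => [// | qr]; exfalso.
  have c1 : #|S| <= #|P| + 1.
    by move: (subset_leq_card Ssub); rewrite cardsU1 xP addnC.
  have c2 : #|r |: (q |: Rof R P)| <= #|Rof R S|.
    apply: subset_leq_card; apply/subsetP=> z; rewrite !inE.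
    case/or3P=> [/eqP -> | /eqP -> | /andP[-> zs]].
    - by rewrite rR (subset_trans rS).
    - by rewrite qR.
    - by rewrite (subset_trans zs).
  have n1 : r \notin q |: Rof R P.
    rewrite !inE negb_or eq_sym qr /= negb_and; apply/orP; right.
    apply/negP=> /subsetP/(_ x xr); by rewrite (negbTE xP).
  have n2 : q \notin Rof R P.
    rewrite inE negb_and; apply/orP; right.
    apply/negP=> /subsetP/(_ x xq); by rewrite (negbTE xP).
  have e2 : #|r |: (q |: Rof R P)| = #|Rof R P| + 2.
    by rewrite cardsU1 n1 cardsU1 n2 /= addnA addnC.
  move: hPS; rewrite /delta => hPS. clear -c1 c2 e2 hPS. lia.
apply: NNPP => Hneg.
have H : forall x, x \in r -> r :\ x \in R \/
    exists Y : {set T}, [/\ r :\ x \subset Y, selfint R Y & x \notin Y].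
  move=> x xr; case: (boolP (r :\ x \in R)) => [h | nR]; first by left.
  right; apply: NNPP => nY; apply: Hneg; exists x => //; split => //.
  move=> Y rY sY; apply: NNPP => xY; apply: nY; exists Y; split => //.
  exact/negP.
have r0 := dR_ge0 r hC.
case: (boolP [forall x in r, r :\ x \in R]) => [/forall_inP allR | ].
-
  have c : #|r |: [set r :\ z | z in r]| <= #|Rof R r|.
    apply: subset_leq_card; apply/subsetP=> q; rewrite !inE.
    case/orP=> [/eqP -> | /imsetP [z zr ->]]; first by rewrite rR subxx.
    by rewrite allR // subsetDl.
  have ni : r \notin [set r :\ z | z in r].
    apply/imsetP=> [[z zr e]]; move: zr; rewrite e !inE eqxx //.
  have inj : {in r &, injective (fun z => r :\ z)}.
    move=> z1 z2 z1r z2r e; case: (eqVneq z1 z2) => [// | ne]; exfalso.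
    have : z1 \in r :\ z2 by rewrite !inE ne z1r.
    by rewrite -e !inE eqxx.
  have e3 : #|r |: [set r :\ z | z in r]| = #|r| + 1.
    by rewrite cardsU1 ni card_in_imset // addnC.
  case: hC => _ /(_ r); rewrite /delta => h0.
  clear -h0 e3 c. lia.
- move/forall_inPn=> [x0 x0r nx0].
  have Y0 : exists Y : {set T}, [/\ r :\ x0 \subset Y, selfint R Y & x0 \notin Y].
    by case: (H x0 x0r) => // h; rewrite h in nx0.
  have allY : forall y, y \in r -> exists Y : {set T}, [/\ r :\ y \subset Y, selfint R Y & y \notin Y].
    move=> y yr; case: (eqVneq y x0) => [-> // | ne].
    case: (H y yr) => // yR.
    have := Uniq x0 x0r Y0 (r :\ y) yR.
    move=> /(_ (subset_trans (subsetDl _ _) rS)); rewrite !inE x0r eq_sym ne => /(_ isT) e.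
    by move: yr; rewrite -e !inE eqxx.
  have sub : Rof R S :\ r \subset Rof R (S :\: r).
    apply/subsetP=> q; rewrite !inE => /and3P[qr qR qS]; rewrite qR /=.
    apply/subsetP=> z zq; rewrite !inE (subsetP qS) // andbT.
    apply/negP=> zr; move/negP: qr; apply; apply/eqP.
    exact: (Uniq z zr (allY z zr) q qR qS zq).
  have c1 := subset_leq_card sub.
  have rRS : r \in Rof R S by rewrite inE rR rS.
  have e4 : #|Rof R S| = #|Rof R S :\ r| + 1.
    by rewrite (cardsD1 r (Rof R S)) rRS addnC.
  have cS : #|S :\: r| + #|r| = #|S|.
    by rewrite cardsD (setIidPr rS) subnK // subset_leq_card.
  have eS : (S :\: r) :|: r = S.
    apply/setP=> z; rewrite !inE; case zr: (z \in r) => /=.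
    - by rewrite (subsetP rS).
    - by rewrite orbF.
  have hsub := dR_subadd (S :\: r) r hC.
  rewrite eS (selfint_dR SS) in hsub.
  have hd2 := dR_le R (subxx (S :\: r)).
  move: hsub hd2 hd; rewrite /delta => hsub hd2 hd.
  clear -hsub hd2 hd c1 cS r0 e4. lia.
Qed.

Lemma capU {T : finType} (P : {set {set T}}) (G : {set T}) (Phi : {set {set T}}) :
  Rof P G :&: \bigcup_(H in Phi) Rof P H =
  \bigcup_(K in [set G :&: H | H in Phi]) Rof P K.
Proof.
apply/setP => q; apply/idP/idP.
- rewrite inE => /andP[qG /bigcupP[H Hin qH]]; apply/bigcupP; exists (G :&: H).
  + exact: imset_f.
  + by rewrite RofI inE qG qH.
- move=> /bigcupP[K /imsetP[H Hin ->]]; rewrite RofI inE => /andP[qG qH].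
  rewrite inE qG /=; apply/bigcupP; exists H => //.
Qed.

Lemma IE {T : finType} (P Q : {set {set T}}) :
  forall n (Phi : {set {set T}}), #|Phi| <= n ->
  (forall G H, G \in Phi -> H \in Phi -> G :&: H \in Phi) ->
  (forall G, G \in Phi -> #|Rof P G| = #|Rof Q G|) ->
  #|\bigcup_(G in Phi) Rof P G| = #|\bigcup_(G in Phi) Rof Q G|.
Proof.
elim=> [|n IH] Phi hn hI hc.
  move: hn; rewrite leqn0 cards_eq0 => /eqP ->; by rewrite !big_set0.
case: (set_0Vmem Phi) => [-> | [G0 G0in]]; first by rewrite !big_set0.
have [G Gin Gmax] := @arg_maxnP _ G0 (mem Phi) (fun G : {set T} => #|G|) G0in.
have {}Gin : G \in Phi by exact: Gin.
have Gtop : forall H, H \in Phi -> G \subset H -> H = G.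
  move=> H Hin sGH; apply/eqP; rewrite eq_sym eqEcard sGH; exact: (Gmax H Hin).
set Phi' := Phi :\ G.
set Psi := [set G :&: H | H in Phi'].
have cPhi' : #|Phi'| <= n.
  by move: hn; rewrite (cardsD1 G Phi) Gin add1n ltnS.
have cPsi : #|Psi| <= n by apply: leq_trans cPhi'; apply: leq_imset_card.
have hI' : forall G1 H1, G1 \in Phi' -> H1 \in Phi' -> G1 :&: H1 \in Phi'.
  move=> G1 H1; rewrite !inE => /andP[n1 i1] /andP[n2 i2].
  rewrite hI // andbT; apply/eqP=> e.
  have : G1 = G by apply: Gtop => //; rewrite -e subsetIl.
  by move/eqP: n1.
have hIpsi : forall G1 H1, G1 \in Psi -> H1 \in Psi -> G1 :&: H1 \in Psi.
  move=> G1 H1 /imsetP[A Ain ->] /imsetP[B Bin ->].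
  have -> : G :&: A :&: (G :&: B) = G :&: (A :&: B).
    by rewrite setIACA setIid.
  exact/imset_f/hI'.
have hcPhi' : forall G1, G1 \in Phi' -> #|Rof P G1| = #|Rof Q G1|.
  by move=> G1; rewrite inE => /andP[_ i]; apply: hc.
have hcPsi : forall G1, G1 \in Psi -> #|Rof P G1| = #|Rof Q G1|.
  move=> G1 /imsetP[A Ain ->]; apply: hc; apply: hI => //.
  by move: Ain; rewrite inE => /andP[].
have e1 := IH Phi' cPhi' hI' hcPhi'.
have e2 := IH Psi cPsi hIpsi hcPsi.
rewrite (big_setD1 G Gin) (big_setD1 G Gin) /=.
have u1 := cardsUI (Rof P G) (\bigcup_(H in Phi') Rof P H).
have u2 := cardsUI (Rof Q G) (\bigcup_(H in Phi') Rof Q H).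
rewrite capU in u1; rewrite capU in u2.
have e0 := hc G Gin.
rewrite -/Phi' -/Psi in u1 u2 e1 e2 *.
rewrite e0 e1 e2 -u2 in u1; exact: (addIn u1).
Qed.

Definition flatb {T : finType} (R : {set {set T}}) (G : {set T}) :=
  [forall y, (dR R (y |: G) == dR R G) ==> (y \in G)].

Lemma flatP {T : finType} (R : {set {set T}}) (G : {set T}) y :
  flatb R G -> dR R (y |: G) = dR R G -> y \in G.
Proof. by move=> /forallP /(_ y) /implyP h e; apply: h; rewrite e. Qed.

Lemma maxflat {T : finType} (R : {set {set T}}) (p : {set T}) :
  exists G : {set T}, [/\ p \subset G, flatb R G & dR R G = dR R p].
Proof.
pose pr := [pred G : {set T} | (p \subset G) && (dR R G == dR R p)].
have p0 : pr p by rewrite /pr /= subxx eqxx.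
have [G /andP[pG /eqP eG] Gmax] := @arg_maxnP _ p pr (fun G : {set T} => #|G|) p0.
exists G; split => //.
apply/forallP=> y; apply/implyP=> /eqP e.
have h := Gmax (y |: G); rewrite /= subsetU ?pG ?orbT // e eG eqxx in h.
move: (h isT); rewrite cardsU1; case: (y \in G) => //=.
by rewrite add1n ltnn.
Qed.

Lemma flat_sub {T : finType} (R : {set {set T}}) (G W : {set T}) y :
  flatb R G -> W \subset G -> dR R (y |: W) = dR R W -> y \in G.
Proof.
move=> fG sWG e; case: (boolP (y \in G)) => // yG.
have yG0 := yG; exfalso; move/negP: yG0; apply; apply: (flatP fG).
have hs := dR_submod R G (y |: W).
have e1 : G :|: (y |: W) = y |: G.
  by rewrite setUA [G :|: _]setUC -setUA (setUidPl sWG).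
have e2 : G :&: (y |: W) = W.
  apply/setP=> z; rewrite !inE; case: (eqVneq z y) => [-> | ne] /=.
    by rewrite (negbTE yG) /=; apply/esym/negP=> yW; move: yG; rewrite (subsetP sWG).
  by case zW: (z \in W); rewrite ?andbT ?andbF //= (subsetP sWG).
rewrite e1 e2 e in hs.
have hm : (dR R G <= dR R (y |: G))%R by apply: dR_mono; apply: subsetUr.
apply/eqP; rewrite eq_le hm andbT; lia.
Qed.

Lemma flatI {T : finType} (R : {set {set T}}) (G H : {set T}) :
  flatb R G -> flatb R H -> flatb R (G :&: H).
Proof.
move=> fG fH; apply/forallP=> y; apply/implyP=> /eqP e.
rewrite inE (flat_sub fG (subsetIl G H) e) (flat_sub fH (subsetIr G H) e) //.
Qed.

Lemma flat_selfint {T : finType} (R P : {set {set T}}) (G : {set T}) :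
  (forall X, dR P X = dR R X) -> flatb R G -> delta P G = dR R G.
Proof.
move=> hd fG; have [Z sGZ eZ] := dR_ex P G.
have sZG : Z \subset G.
  apply/subsetP=> y yZ; apply: (flatP fG); apply/eqP; rewrite eq_le.
  apply/andP; split; last by apply: dR_mono; apply: subsetUr.
  rewrite -!hd eZ.
  apply: le_trans (dR_mono P (_ : y |: G \subset Z)) (dR_le P (subxx Z)).
  by rewrite subUset sub1set yZ sGZ.
have eGZ : G = Z by apply/eqP; rewrite eqEsubset sGZ sZG.
by rewrite -hd eZ eGZ.
Qed.

Lemma bound {T : finType} (R R0 : {set {set T}}) (k : nat) (r : {set T}) :
  inC R -> inC R0 -> (forall X, dR R0 X = dR R X) ->
  (forall q, q \in R0 -> #|q| <= k) ->
  r \in R -> ((#|r|)%:Z <= dR R r + 1)%R -> #|r| <= k.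
Proof.
move=> hC hC0 hd hk rR hr.
rewrite leqNgt; apply/negP=> kr.
have [F [rF fF eF]] := maxflat R r.
set m := dR R r.
set Phi := [set G : {set T} | [&& G \subset F, flatb R G & (dR R G < m)%R]].
have hI : forall G H, G \in Phi -> H \in Phi -> G :&: H \in Phi.
  move=> G H; rewrite !inE => /and3P[sG fG lG] /and3P[sH fH lH].
  rewrite (subset_trans (subsetIl G H) sG) flatI //=.
  apply: le_lt_trans lG; apply: dR_mono; apply: subsetIl.
have hidR : forall X, dR R X = dR R X by [].
have hc : forall G, G \in Phi -> #|Rof R G| = #|Rof R0 G|.
  move=> G; rewrite inE => /and3P[_ fG _].
  have a1 := flat_selfint hidR fG; have a2 := flat_selfint hd fG.
  move: a1 a2; rewrite /delta; lia.
have hIE := @IE T R R0 #|Phi| Phi (leqnn _) hI hc.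
have sub1 : Rof R0 F \subset \bigcup_(G in Phi) Rof R0 G.
  apply/subsetP=> q; rewrite inE => /andP[qR0 qF].
  have [G0 [qG0 fG0 eG0]] := maxflat R q.
  apply/bigcupP; exists (G0 :&: F); last by rewrite inE qR0 subsetI qG0 qF.
  rewrite inE subsetIr flatI //=.
  have l1 : (dR R (G0 :&: F) <= dR R G0)%R by apply: dR_mono; apply: subsetIl.
  have l2 : (dR R0 q <= delta R0 q)%R by apply: dR_le.
  have l3 : 0 < #|Rof R0 q| by apply/card_gt0P; exists q; rewrite inE qR0 subxx.
  have l4 := hk q qR0.
  rewrite hd -eG0 in l2. move: l2; rewrite /delta => l2.
  rewrite /m; clear -l1 l2 l3 l4 kr hr. lia.
have sub2 : \bigcup_(G in Phi) Rof R G \subset Rof R F :\ r.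
  apply/subsetP=> q /bigcupP[G]; rewrite !inE => /and3P[sGF _ lG] /andP[qR qG].
  rewrite qR (subset_trans qG sGF) !andbT; apply/eqP=> qr; move: qG; rewrite qr => rG.
  have := dR_mono R rG; rewrite -/m. lia.
have c1 := subset_leq_card sub1; have c2 := subset_leq_card sub2.
have rRF : r \in Rof R F by rewrite inE rR rF.
have e4 : #|Rof R F| = #|Rof R F :\ r| + 1.
  by rewrite (cardsD1 r (Rof R F)) rRF addnC.
have a1 := flat_selfint hidR fF; have a2 := flat_selfint hd fF.
have e5 : #|Rof R F| = #|Rof R0 F| by move: a1 a2; rewrite /delta; lia.
rewrite hIE in c2.
have c3 := leq_trans c1 c2. rewrite -e5 e4 in c3. by move: c3; rewrite addn1 ltnn.
Qed.

Lemma reduce {T : finType} (R0 R1 : {set {set T}}) (k : nat) (C : {set T}) :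
  inC R0 -> (forall q, q \in R0 -> #|q| <= k) ->
  (forall X, dR R0 X = dR R1 X) ->
  forall n (R : {set {set T}}), measure R < n -> inC R ->
  (forall X, dR R X = dR R1 X) -> selfint R C ->
  exists R' : {set {set T}}, [/\ inC R', (forall q, q \in R' -> #|q| <= k),
      (forall X, dR R' X = dR R1 X) & selfint R' C].
Proof.
move=> hC0 hk0 hd01; elim=> [|n IH] R hm hC hd sC; first by [].
case: (boolP [exists r in R, (dR R r + 2 <= (#|r|)%:Z)%R]).
- case/exists_inP => r rR hr.
  have [x xr [nR hY]] := strong hC rR hr.
  have r2 : 2 <= #|r| by have := dR_ge0 r hC; lia.
  have [hC' hd' hle'] := shrink_ok hC rR xr r2 nR hY.
  have hm' := shrink_measure rR nR xr.
  apply: (IH (shrink R r x)).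
  + by apply: leq_trans hm' _; rewrite -ltnS.
  + exact: hC'.
  + by move=> X; rewrite hd' hd.
  + exact: selfint_shrink hd' hle' sC.
- move/exists_inPn=> hall.
  exists R; split => // q qR.
  apply: (bound hC hC0 _ hk0 qR).
  + by move=> X; rewrite hd hd01.
  + by have := hall q qR; rewrite -ltNge; lia.
Qed.

Theorem mainTheorem12 (T : finType) (k : nat) (cl : {set T} -> {set T}) (C : {set T}) :
  3 <= k ->
  inPGCk (Some k) cl ->
  unlhd None C cl ->
  unlhd (Some k) C cl.
Proof.
move=> _ [R0 [[hC0 hk0] ecl0]] [R1 [[hC1 _] [ecl1 sC1]]].
have hd01 : forall X, dR R0 X = dR R1 X.
  by apply: dR_clR_eq => //; rewrite ecl0 ecl1.
have [R [hC hk hd sC]] := reduce hC0 hk0 hd01 (ltnSn (measure R1)) hC1 (fun X => erefl) sC1.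
exists R; split; first by split.
split => //.
rewrite -ecl1; apply: functional_extensionality => X.
by apply/setP=> y; rewrite !inE !hd.
Qed.
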